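(* For $c\in\mathbb{R}$, $\Omega_0^M\cap\kappa^{-1}(c)\neq\varnothing$ if and only if $c<-14$.
   Context: $\kappa(x,y,z)=-x^2-y^2+z^2+xyz-2$ on $\mathbb{R}^3$, and $\Omega_0^M=\{(x,y,z)\in\mathbb{R}^3: z<-2,\ xy+z>2\}$ (equivalently $z<-2$ and $\bar z<-2$ where $\bar z=-xy-z$). *)

(* Defs.v *)
From Stdlib Require Import Reals.
Open Scope R_scope.

Definition kappa (x y z : R) : R := - x^2 - y^2 + z^2 + x*y*z - 2.

Definition Omega0M (x y z : R) : Prop := z < -2 /\ x*y + z > 2.

(* Main.v *)
Require Import Defs.
From Stdlib Require Import Reals Lra Psatz.
Open Scope R_scope.

Theorem mainTheorem3 (c : R) :
  (exists x y z : R, Omega0M x y z /\ kappa x y z = c) <-> c < -14.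
Proof.
  split.
  - intros [x [y [z [[H1 H2] H3]]]]. subst c. unfold kappa.
    assert (P : 0 < (-z-2)*(x*y+z-2)) by (apply Rmult_lt_0_compat; lra).
    assert (Q : 0 <= (x-y)^2) by apply pow2_ge_0.
    nra.
  - intros Hc.
    set (s := -2 + sqrt (2 - c)).
    assert (Hq : sqrt (2 - c) * sqrt (2 - c) = 2 - c) by (apply sqrt_sqrt; lra).
    assert (H4 : 4 < sqrt (2 - c)).
    { rewrite <- sqrt_square with 4 by lra. apply sqrt_lt_1; lra. }
    assert (Hs : 2 < s) by (unfold s; lra).
    set (t := sqrt (2 * s)).
    assert (Ht : t * t = 2 * s) by (apply sqrt_sqrt; lra).
    exists t, t, (-s). split.
    + unfold Omega0M. lra.
    + unfold kappa. simpl.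
      replace (t * t * - s) with (2*s * -s) by (rewrite Ht; ring).
      replace (-(t*(t*1)) - t*(t*1)) with (-(4*s)) by (rewrite Rmult_1_r, Ht; ring).
      unfold s. nra.
Qed.
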